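(* For any MeanEstimation algorithm (possibly using shared randomness) in which any machine receives at most $b$ bits, there is a valid input for which $\mathbb{E}[\|\mathbf{EST}-\boldsymbol\mu\|^2]=\Omega\!\left(y^2\,2^{-2b/d}\right)$.
   Context: MeanEstimation: there are $n$ machines; machine $v$ receives $\mathbf{x}_v\in\mathbb{R}^d$, and all receive a common $y$ with $\|\mathbf{x}_u-\mathbf{x}_v\|\le y$ for all $u,v$. All machines must output the same $\mathbf{EST}\in\mathbb{R}^d$ with $\mathbb{E}[\mathbf{EST}]=\boldsymbol\mu=\frac1n\sum_v\mathbf{x}_v$. $\|\cdot\|$ is a fixed one of the $\ell_1,\ell_2,\ell_\infty$ norms. Algorithms may use a common random string available to all machines. Bits received by a machine count all bits it receives from any source during the algorithm, and the bound $b$ holds with certainty. The hidden constant is absolute. *)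

(* Defs.v *)
From HB Require Import structures.
From mathcomp Require Import all_boot all_order all_algebra.
From mathcomp Require Import all_classical all_reals all_analysis.
Set Implicit Arguments. Unset Strict Implicit. Unset Printing Implicit Defensive.
Import Order.TTheory GRing.Theory Num.Theory.
Local Open Scope ring_scope.

Inductive normkind := L1 | L2 | Linf.

Definition vnorm (R : realType) (d : nat) (k : normkind) (v : 'rV[R]_d) : R :=
  match k with
  | L1 => \sum_(i < d) `|v 0 i|
  | L2 => Num.sqrt (\sum_(i < d) (v 0 i) ^+ 2)
  | Linf => \big[Num.max/0]_(i < d) `|v 0 i|
  end.

Definition meanv (R : realType) (n d : nat) (x : 'I_n -> 'rV[R]_d) : 'rV[R]_d :=
  (n%:R)^-1 *: \sum_(v < n) x v.

Definition valid_input (R : realType) (n d : nat) (k : normkind) (y : R)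
  (x : 'I_n -> 'rV[R]_d) : Prop :=
  forall u v : 'I_n, vnorm k (x u - x v) <= y.

(* Main.v *)
Require Import Defs.
From HB Require Import structures.
From mathcomp Require Import all_boot all_order all_algebra.
From mathcomp Require Import all_classical all_reals all_analysis.
From mathcomp Require Import measurable_realfun.
From mathcomp Require Import ring lra zify.
Import Order.TTheory GRing.Theory Num.Theory.
Local Open Scope ring_scope.
Definition nd (u v : nat) : nat := (u - v + (v - u))%N.
Lemma nd_real (R : numDomainType) u v : (nd u v)%:R = `|u%:R - v%:R| :> R.
Proof.
rewrite /nd; case: (leqP u v) => h.
  have -> : (u - v = 0)%N by apply/eqP; rewrite subn_eq0.
  rewrite add0n (natrB _ h) distrC ger0_norm // subr_ge0 ler_nat //.
have h' := ltnW h.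
have -> : (v - u = 0)%N by apply/eqP; rewrite subn_eq0.
by rewrite addn0 (natrB _ h') ger0_norm // subr_ge0 ler_nat.
Qed.
Lemma geo_sum_aux (R : realFieldType) (u m : nat) :
  \sum_(v < m) (2^-1 : R) ^+ (nd u v) <=
  (if (m <= u)%N then (2^-1) ^+ (u - m) else 3 - 2 * (2^-1) ^+ (m - u)).
Proof.
elim: m => [|m IH]; first by rewrite big_ord0 leq0n subn0 exprn_ge0 // invr_ge0.
rewrite big_ord_recr /=.
case: (ltnP m u) => hmu.
  rewrite (ltnW hmu) in IH.
  have -> : nd u m = (u - m)%N by rewrite /nd; lia.
  have e : (u - m = (u - m.+1).+1)%N by lia.
  rewrite e exprS in IH *.
  set t := (2^-1 : R) ^+ _ in IH *.
  have : 0 <= t by rewrite exprn_ge0 // invr_ge0.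
  lra.
move: IH; case: (leqP m u) => hmu2 IH.
  have e : m = u by apply/eqP; rewrite eqn_leq hmu2 hmu.
  subst m. rewrite subnn expr0 in IH.
  have -> : nd u u = 0%N by rewrite /nd subnn.
  have -> : (u.+1 - u = 1)%N by lia.
  rewrite expr0 expr1. lra.
have -> : nd u m = (m - u)%N by rewrite /nd; lia.
have -> : (m.+1 - u = (m - u).+1)%N by lia.
rewrite exprS.
set t := (2^-1 : R) ^+ _ in IH *.
lra.
Qed.

Lemma geo_sum (R : realFieldType) (u m : nat) :
  \sum_(v < m) (2^-1 : R) ^+ (nd u v) <= 3.
Proof.
apply: le_trans (geo_sum_aux R u m) _.
case: ifP => _.
  apply: le_trans (_ : 1 <= 3); last by lra.
  apply: exprn_ile1; [by rewrite invr_ge0 | lra].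
have : 0 <= (2^-1 : R) ^+ (m - u) by rewrite exprn_ge0 // invr_ge0.
lra.
Qed.
Lemma ball_card (R : realFieldType) (d m : nat) (u : 'I_d -> nat) :
  (#|[set s : {ffun 'I_d -> 'I_m} | (\sum_j nd (u j) (s j) < 2 * d)%N]|%:R : R)
    <= 12 ^+ d.
Proof.
set B := [set s | _].
have h0 : (0 : R) <= 2^-1 by rewrite invr_ge0.
have h1 : (2^-1 : R) <= 1 by lra.
have key : (#|B|%:R : R) * (4^-1) ^+ d <=
    \sum_(s : {ffun 'I_d -> 'I_m}) \prod_j (2^-1 : R) ^+ nd (u j) (s j).
  rewrite -sum1_card natr_sum mulr_suml.
  apply: le_trans (_ : \sum_(s in B) \prod_j (2^-1 : R) ^+ nd (u j) (s j) <= _).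
    apply: ler_sum => s; rewrite inE => hs.
    rewrite mul1r prodrXr.
    have -> : (4^-1 : R) = 2^-1 ^+ 2 by rewrite expr2; field.
    rewrite -exprM; apply: ler_wiXn2l => //. exact: ltnW.
  rewrite [X in _ <= X](bigID (mem B)) /= lerDl.
  by apply: sumr_ge0 => s _; apply: prodr_ge0 => j _; apply: exprn_ge0.
have : \sum_(s : {ffun 'I_d -> 'I_m}) \prod_j (2^-1 : R) ^+ nd (u j) (s j) <= 3 ^+ d.
  rewrite -(bigA_distr_bigA (fun (j : 'I_d) (v : 'I_m) => (2^-1 : R) ^+ nd (u j) v)).
  rewrite -[X in _ <= _ ^+ X](card_ord d) -prodr_const.
  apply: ler_prod => j _; rewrite sumr_ge0 /=; last by move=> *; apply: exprn_ge0.
  exact: geo_sum.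
move=> h2.
have h4 : (0 : R) < (4^-1) ^+ d by rewrite exprn_gt0 // invr_gt0.
have := le_trans key h2.
rewrite -ler_pdivlMr // -exprVn invrK -exprMn.
have -> : (3 * 4 : R) = 12 by lra.
by [].
Qed.
Fixpoint seqs (b : nat) : seq (seq bool) :=
  match b with
  | 0 => [:: [::]]
  | b'.+1 => [::] :: [seq x :: s | x <- [:: true; false], s <- seqs b']
  end.

Lemma size_seqs b : (size (seqs b) < 2 ^ b.+1)%N.
Proof.
elim: b => [|b IH] //.
change (size (seqs b.+1)) with (size [seq x :: s | x <- [:: true; false], s <- seqs b]).+1.
rewrite size_allpairs expnS.
simpl size; lia.
Qed.

Lemma mem_seqs b s : (size s <= b)%N -> s \in seqs b.
Proof.
elim: b s => [|b IH] [|x s] // hs.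
change (x :: s \in [::] :: [seq x :: s | x <- [:: true; false], s <- seqs b]).
rewrite in_cons; apply/orP; right; apply/allpairsP; exists (x, s) => /=; split => //.
  by case: (x).
exact: IH.
Qed.

Lemma union_card (S : Type) (T : finType) (L : seq S) (P : S -> pred T) :
  (#|[set t | has (fun s => P s t) L]| <= \sum_(s <- L) #|[set t | P s t]|)%N.
Proof.
elim: L => [|a L IH].
  rewrite big_nil leqn0 cards_eq0; apply/eqP/setP => t; by rewrite !inE.
rewrite big_cons.
have -> : [set t | has (fun s => P s t) (a :: L)] =
          [set t | P a t] :|: [set t | has (fun s => P s t) L].
  by apply/setP => t; rewrite !inE.
apply: leq_trans (leq_card_setU _ _) _.
exact: leq_add.
Qed.

Lemma near_card (d m b : nat) (F : {ffun 'I_d -> 'I_m} -> seq bool)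
  (U : seq bool -> 'I_d -> nat) :
  (forall s, size (F s) <= b)%N ->
  (#|[set s : {ffun 'I_d -> 'I_m} | (\sum_j nd (U (F s) j) (s j) < 2 * d)%N]|
     <= 2 ^ b.+1 * 12 ^ d)%N.
Proof.
move=> hF.
set P := fun q (s : {ffun 'I_d -> 'I_m}) => (\sum_j nd (U q j) (s j) < 2 * d)%N.
apply: leq_trans (_ : #|[set t | has (fun q => P q t) (seqs b)]| <= _)%N.
  apply: subset_leq_card; apply/fintype.subsetP => s; rewrite !inE => hs.
  by apply/hasP; exists (F s) => //; apply: mem_seqs.
have hU := @union_card _ _ (seqs b) P. apply: leq_trans hU _.
apply: leq_trans (_ : \sum_(q <- seqs b) 12 ^ d <= _)%N.
  apply: leq_sum => q _.
  have := ball_card rat d m (U q).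
  by rewrite -natrX ler_nat.
rewrite big_const_seq count_predT iter_addn_0 mulnC.
apply: leq_mul => //; exact: ltnW (size_seqs b).
Qed.

Lemma sqr_normr {R : realDomainType} (x : R) : `|x| ^+ 2 = x ^+ 2.
Proof. exact: real_normK (num_real x). Qed.

Lemma sq_le {R : realDomainType} (x y : R) : 0 <= x -> x <= y -> x ^+ 2 <= y ^+ 2.
Proof. by move=> x0 xy; apply: lerXn2r; rewrite ?nnegrE // (le_trans x0 xy). Qed.

Definition gam (R : realType) (k : normkind) (d : nat) : R :=
  match k with L1 => d%:R | L2 => Num.sqrt d%:R | Linf => 1 end.

Lemma vnorm_le (R : realType) (k : normkind) (d : nat) (w : 'rV[R]_d) (B : R) :
  0 <= B -> (forall j, `|w 0 j| <= B) -> vnorm k w <= gam R k d * B.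
Proof.
move=> B0 hw; case: k => /=.
- apply: le_trans (_ : \sum_(j < d) B <= _); first by apply: ler_sum => j _.
  by rewrite sumr_const card_ord mulr_natl.
- have -> : Num.sqrt d%:R * B = Num.sqrt (d%:R * B ^+ 2).
    by rewrite sqrtrM ?ler0n // sqrtr_sqr ger0_norm.
  apply: ler_wsqrtr.
  apply: le_trans (_ : \sum_(j < d) B ^+ 2 <= _).
    apply: ler_sum => j _; rewrite -(sqr_normr (w 0 j)).
    by apply: sq_le.
  by rewrite sumr_const card_ord mulr_natl.
- rewrite mul1r; apply: bigmax_le => // j _; exact: hw.
Qed.

Lemma vnorm_lb (R : realType) (k : normkind) (d : nat) (e : 'rV[R]_d) (c : R)
  (del : 'I_d -> nat) : (0 < d)%N -> 0 <= c ->
  (forall j, c * (del j)%:R <= 2 * `|e 0 j|) -> (2 * d <= \sum_j del j)%N ->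
  c ^+ 2 * gam R k d ^+ 2 / 2 <= vnorm k e ^+ 2.
Proof.
move=> d0 c0 he hs.
have hsR : (2 * d)%:R <= \sum_j (del j)%:R :> R by rewrite -natr_sum ler_nat.
have habs : c * d%:R <= \sum_j `|e 0 j|.
  have : c * (\sum_j (del j)%:R) <= 2 * \sum_j `|e 0 j|.
    by rewrite mulr_sumr mulr_sumr; apply: ler_sum => j _.
  rewrite natrM in hsR.
  have : c * (2%:R * d%:R) <= c * \sum_j (del j)%:R by apply: ler_wpM2l.
  lra.
have dR : 0 <= (d%:R : R) by [].
case: k => /=.
- have h1 : 0 <= c * d%:R by apply: mulr_ge0.
  have : (c * d%:R) ^+ 2 <= (\sum_j `|e 0 j|) ^+ 2 by apply: sq_le.
  rewrite exprMn.
  have : 0 <= c ^+ 2 * d%:R ^+ 2 by apply: mulr_ge0; apply: exprn_ge0.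
  lra.
- rewrite sqr_sqrtr // sqr_sqrtr; last by apply: sumr_ge0 => j _; apply: sqr_ge0.
  have : c ^+ 2 / 4 * \sum_j (del j)%:R <= \sum_j e 0 j ^+ 2.
    rewrite mulr_sumr; apply: ler_sum => j _.
    have hj := he j.
    have h0 : 0 <= c * (del j)%:R by apply: mulr_ge0.
    have : (c * (del j)%:R) ^+ 2 <= (2 * `|e 0 j|) ^+ 2 by apply: sq_le.
    rewrite !exprMn sqr_normr.
    have hd : (del j)%:R <= (del j)%:R ^+ 2 :> R.
      by rewrite -natrX ler_nat; case: (del j) => // q; rewrite expnS expn1 leq_pmulr.
    have : c ^+ 2 * (del j)%:R <= c ^+ 2 * (del j)%:R ^+ 2 by apply: ler_wpM2l; [apply: sqr_ge0 | exact: hd].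
    have : 0 <= c ^+ 2 by apply: sqr_ge0.
    lra.
  rewrite natrM in hsR.
  have : c ^+ 2 / 4 * (2%:R * d%:R) <= c ^+ 2 / 4 * \sum_j (del j)%:R.
    by apply: ler_wpM2l => //; apply: divr_ge0 => //; apply: sqr_ge0.
  lra.
- set M := \big[Num.max/0]_(j < d) `|e 0 j|.
  have hM : \sum_j `|e 0 j| <= d%:R * M.
    apply: le_trans (_ : \sum_(j < d) M <= _).
      by apply: ler_sum => j _; exact: le_bigmax.
    by rewrite sumr_const card_ord mulr_natl.
  have dpos : 0 < (d%:R : R) by rewrite ltr0n.
  have hcM : c <= M.
    rewrite -(ler_pM2l dpos) mulrC; apply: le_trans habs hM.
  have : c ^+ 2 <= M ^+ 2 by apply: sq_le.
  rewrite expr1n mulr1.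
  have : 0 <= c ^+ 2 by apply: sqr_ge0.
  lra.
Qed.

Lemma meas_bigmax (R : realType) d0 (Om : measurableType d0) (I : Type) (s : seq I)
  (h : I -> Om -> R) : (forall i, measurable_fun setT (h i)) ->
  measurable_fun setT (fun r => \big[Num.max/0]_(i <- s) h i r).
Proof.
move=> mh; elim: s => [|a s IH].
  under eq_fun do rewrite big_nil. exact: measurable_cst.
under eq_fun do rewrite big_cons.
exact: (measurable_realfun.measurable_maxr (mh a) IH).
Qed.

Lemma vnorm_sq_meas (R : realType) d0 (Om : measurableType d0) (d : nat)
  (k : normkind) (f : Om -> 'rV[R]_d) :
  (forall i, measurable_fun setT (fun r => f r 0 i)) ->
  measurable_fun setT (fun r => (((vnorm k (f r)) ^+ 2)%:E : \bar R)).
Proof.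
move=> hf; change (measurable_fun setT (EFin \o (fun r => vnorm k (f r) ^+ 2))); apply/measurable_EFinP.
have hn : forall i, measurable_fun setT (fun r => `|f r 0 i|).
  move=> i; change (measurable_fun setT (Num.norm \o (fun r => f r 0 i))). apply: measurableT_comp; [exact: normr_measurable | exact: hf].
case: k => /=.
- apply: measurable_realfun.measurable_funX; exact: measurable_sum.
- have -> : (fun r => Num.sqrt (\sum_i f r 0 i ^+ 2) ^+ 2) = (fun r => \sum_i f r 0 i ^+ 2).
    by apply: funext => r; rewrite sqr_sqrtr // sumr_ge0 // => i _; apply: sqr_ge0.
  apply: measurable_sum => i; exact: measurable_realfun.measurable_funX.
- apply: measurable_realfun.measurable_funX; exact: meas_bigmax.
Qed.

Lemma mean_X (R : realType) (n d : nat) (v0 : 'I_n) (w : 'rV[R]_d) :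
  meanv (fun v : 'I_n => if v == v0 then 0 else w) = ((n - 1)%:R / n%:R) *: w.
Proof.
have hn : (0 < n)%N by case: n v0 => [[]|].
rewrite /meanv (bigD1 v0) //= eqxx add0r.
have h1 : \sum_(v | v != v0) (if v == v0 then 0 else w) = \sum_(v | v != v0) w.
  by apply: eq_bigr => v hv; rewrite (negPf hv).
have h2 : \sum_(v < n) w = w + \sum_(v | v != v0) w by exact: bigD1.
have h3 : \sum_(v < n) w = n%:R *: w by rewrite sumr_const card_ord scaler_nat.
rewrite h1.
have -> : \sum_(v | v != v0) w = n%:R *: w - w.
  by rewrite -h3 h2 [w + _]addrC addrK.
rewrite -[w in X in _ *: (_ - X)]scale1r -scalerBl scalerA.
congr (_ *: w); rewrite natrB // mulrC //.
Qed.

Lemma argmin_prop (R : realType) (m : nat) (i0 : 'I_m) (c p : R) : 0 <= c ->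
  forall v : 'I_m,
  c * (nd (Order.arg_min i0 xpredT (fun u : 'I_m => `|p - c * (nat_of_ord u)%:R|)) v)%:R <= 2 * `|p - c * v%:R|.
Proof.
move=> c0; case: arg_minP => // u _ hu v.
have := hu v isT.
rewrite nd_real -(ger0_norm c0) -normrM mulrBr (ger0_norm c0) => h.
have : `|c * u%:R - c * v%:R| <= `|c * u%:R - p| + `|p - c * v%:R|.
  by rewrite (_ : c * u%:R - c * v%:R = (c * u%:R - p) + (p - c * v%:R)) ?ler_normD //; ring.
move=> h2; have := distrC (c * u%:R) p; have := distrC (c * v%:R) (c * u%:R); lra.
Qed.

Lemma numeric (R : realType) (y Q pw r : R) : 0 < y -> 0 < Q -> 0 <= pw ->
  pw * Q ^+ 2 <= 1 -> 2^-1 <= r ->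
  (512%:R ^+ 2)^-1 * y ^+ 2 * pw < ((y / (96%:R * Q)) * r) ^+ 2 / 4%:R.
Proof.
move=> y0 Q0 pw0 hpw hr.
set A := y / Q.
have A0 : 0 < A by apply: divr_gt0.
have hA : y ^+ 2 * pw <= A ^+ 2.
  rewrite /A expr_div_n ler_pdivlMr ?exprn_gt0 // -mulrA -[X in _ <= X]mulr1.
  by apply: ler_wpM2l => //; apply: sqr_ge0.
have e1 : y / (96%:R * Q) * r = A * r / 96%:R.
  by rewrite /A; field; apply: lt0r_neq0.
have h192 : A / 192%:R <= A * r / 96%:R.
  have -> : A / 192%:R = A * 2^-1 / 96%:R by field.
  rewrite ler_pM2r ?invr_gt0 ?ltr0n //; apply: ler_wpM2l => //; exact: ltW.
have hsq : (A / 192%:R) ^+ 2 <= (A * r / 96%:R) ^+ 2.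
  by apply: sq_le => //; apply: divr_ge0 => //; exact: ltW.
have e2 : (A / 192%:R) ^+ 2 / 4%:R = (A / 384%:R) ^+ 2 by field.
have hlt : A / 512%:R < A / 384%:R.
  by rewrite ltr_pM2l // ltf_pV2 ?ltr_nat ?posrE ?ltr0n.
have hsq2 : (A / 512%:R) ^+ 2 < (A / 384%:R) ^+ 2.
  rewrite -subr_gt0 subr_sqr; apply: mulr_gt0; first by rewrite subr_gt0.
  by apply: addr_gt0; apply: divr_gt0; rewrite ?ltr0n.
have e3 : (512%:R ^+ 2)^-1 * A ^+ 2 = (A / 512%:R) ^+ 2 by field.
have hc : 0 <= (512%:R ^+ 2 : R)^-1 by rewrite invr_ge0; apply: exprn_ge0; exact: ler0n.
have h4 : (512%:R ^+ 2)^-1 * (y ^+ 2 * pw) <= (512%:R ^+ 2)^-1 * A ^+ 2 by apply: ler_wpM2l.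
rewrite e1 -mulrA.
have h5 : (A / 192%:R) ^+ 2 / 4%:R <= (A * r / 96%:R) ^+ 2 / 4%:R.
  by rewrite ler_pM2r ?invr_gt0 ?ltr0n.
lra.
Qed.

Lemma rowB (R : realType) (d : nat) (A B : 'rV[R]_d) j : (A - B) 0 j = A 0 j - B 0 j.
Proof. by rewrite !mxE. Qed.

Theorem theorem38 :
  exists c : rat, 0 < c /\
  forall (R : realType) (n d b : nat) (k : normkind) (y : R),
    (2 <= n)%N -> (0 < d)%N -> 0 <= y ->
  forall (dO : measure_display) (Omega : measurableType dO)
         (P : probability Omega R)
         (recv : 'I_n -> ('I_n -> 'rV[R]_d) -> Omega -> seq bool)
         (out : 'I_n -> 'rV[R]_d -> Omega -> seq bool -> 'rV[R]_d)
         (EST : ('I_n -> 'rV[R]_d) -> Omega -> 'rV[R]_d),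
    (forall x, valid_input k y x ->
       forall (v : 'I_n) (r : Omega), (size (recv v x r) <= b)%N) ->
    (forall x, valid_input k y x ->
       forall (v : 'I_n) (r : Omega), EST x r = out v (x v) r (recv v x r)) ->
    (forall x, valid_input k y x -> forall i : 'I_d,
       measurable_fun setT (fun r => EST x r 0 i) /\
       P.-integrable setT (fun r => (EST x r 0 i)%:E) /\
       (\int[P]_r (EST x r 0 i)%:E = (meanv x 0 i)%:E)%E) ->
    exists x, valid_input k y x /\
      ((ratr c * y ^+ 2 * powR 2 (- (2 * b%:R / d%:R)))%:E
        <= \int[P]_r ((vnorm k (EST x r - meanv x)) ^+ 2)%:E)%E.
Proof.
exists ((512%:R ^+ 2)^-1); split.
  by rewrite invr_gt0; apply: exprn_gt0; exact: ltr0n.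
move=> R n d b k y hn hd hy dO Omega P recv out EST hb hout hunb.
have hc : ratr ((512%:R ^+ 2)^-1 : rat) = (512%:R ^+ 2)^-1 :> R.
  by rewrite fmorphV rmorphXn rmorph_nat.
rewrite hc.
set pw := powR 2 (- (2 * b%:R / d%:R)).
case: (eqVneq y 0) => [y0|yn0].
  exists (fun _ => 0); split.
    move=> u v; rewrite subrr.
    have := @vnorm_le R k d 0 0 (lexx 0).
    rewrite mulr0 y0; apply => j; rewrite mxE normr0 //.
  rewrite y0 expr0n /= mulr0 mul0r; apply: integral_ge0 => r _.
  by rewrite lee_fin; apply: sqr_ge0.
have ypos : 0 < y by rewrite lt_def yn0 hy.

have n0 : (0 < n)%N by apply: leq_trans hn.
pose v0 : 'I_n := Ordinal n0.
pose q := (b %/ d)%N.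
pose m := (12 * 2 ^ (q + 3))%N.
have m0 : (0 < m)%N by rewrite /m muln_gt0 expn_gt0.
pose i0 : 'I_m := Ordinal m0.
pose g := gam R k d.
have g0 : 0 < g by rewrite /g; case: (k) => /=; rewrite ?sqrtr_gt0 ?ltr0n ?ltr01.
have mR0 : 0 < (m%:R : R) by rewrite ltr0n.
have gm0 : 0 < g * m%:R by apply: mulr_gt0.
pose a := y / (g * m%:R).
have a0 : 0 <= a by apply: divr_ge0; [exact: ltW | exact: ltW].
pose cc := a * ((n - 1)%:R / n%:R).
have cc0 : 0 <= cc by apply: mulr_ge0 => //; apply: divr_ge0; exact: ler0n.
pose W (s : {ffun 'I_d -> 'I_m}) : 'rV[R]_d := \row_j (a * (s j : nat)%:R).
pose X (s : {ffun 'I_d -> 'I_m}) := fun v : 'I_n => if v == v0 then 0 else W s.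
have hval : forall s, valid_input k y (X s).
  move=> s u v.
  have -> : y = g * (a * m%:R).
    by rewrite /a; field; rewrite !lt0r_neq0.
  apply: vnorm_le; first by apply: mulr_ge0 => //; exact: ltW.
  have hw : forall j, `|a * (s j : nat)%:R| <= a * m%:R.
    move=> j; rewrite ger0_norm; last by apply: mulr_ge0 => //; exact: ler0n.
    by apply: ler_wpM2l => //; rewrite ler_nat ltnW.
  move=> j; rewrite /X !mxE.
  case: (u == v0); case: (v == v0);
    rewrite ?mxE ?subrr ?normr0 ?subr0 ?sub0r ?normrN ?hw //; apply: mulr_ge0 => //; exact: ler0n.
have hmean : forall s j, meanv (X s) 0 j = cc * (s j : nat)%:R.
  by move=> s j; rewrite /X mean_X !mxE /cc mulrA [_ * a]mulrC.
have hest : forall s r, EST (X s) r = out v0 0 r (recv v0 (X s) r).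
  by move=> s r; rewrite (hout _ (hval s) v0 r) {1}/X eqxx.
pose err s r := vnorm k (EST (X s) r - meanv (X s)) ^+ 2.
have hmeas : forall s, measurable_fun setT (fun r => (err s r)%:E).
  move=> s; apply: (@vnorm_sq_meas R dO Omega d k (fun r => EST (X s) r - meanv (X s))) => i.
  have -> : (fun r => (EST (X s) r - meanv (X s)) 0 i) =
            (fun r => EST (X s) r 0 i - meanv (X s) 0 i).
    by apply: funext => r; rewrite rowB.
  apply: measurable_funB; [exact: (hunb _ (hval s) i).1 | exact: measurable_cst].
pose U (p : 'rV[R]_d) (j : 'I_d) : nat :=
  Order.arg_min i0 xpredT (fun u : 'I_m => `|p 0 j - cc * (nat_of_ord u)%:R|).
pose E2 := cc ^+ 2 * g ^+ 2 / 2.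
have hfar : forall s r, ~~ (\sum_j nd (U (EST (X s) r) j) (s j) < 2 * d)%N -> E2 <= err s r.
  move=> s r hs; rewrite -leqNgt in hs.
  apply: (@vnorm_lb R k d _ cc (fun j => nd (U (EST (X s) r) j) (s j))) => // j.
  rewrite rowB hmean; exact: argmin_prop.

pose N := #|{ffun 'I_d -> 'I_m}|.
have hN : N = (m ^ d)%N by rewrite /N card_ffun !card_ord.
have hb2 : (b.+2 <= (q + 3) * d)%N.
  have := divn_eq b d; have := ltn_pmod b hd; rewrite /q; nia.
have hpt : forall r, N%:R / 2 * E2 <= \sum_s err s r.
  move=> r.
  pose Near := [set s : {ffun 'I_d -> 'I_m} |
                 (\sum_j nd (U (EST (X s) r) j) (s j) < 2 * d)%N].
  have hNear1 : (#|Near| <= 2 ^ b.+1 * 12 ^ d)%N.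
    have := near_card d m b (fun s => recv v0 (X s) r) (fun q => U (out v0 0 r q))
              (fun s => hb _ (hval s) v0 r).
    apply: leq_trans; apply: subset_leq_card; apply/fintype.subsetP => s.
    by rewrite !inE hest.
  have hNear : (2 * #|Near| <= N)%N.
    apply: leq_trans (leq_mul (leqnn 2) hNear1) _.
    rewrite hN /m expnMn -expnM.
    have e : (2 * (2 ^ b.+1 * 12 ^ d) = 12 ^ d * 2 ^ b.+2)%N by rewrite (expnS 2 b.+1); ring.
    rewrite e; apply: leq_mul => //; exact: leq_pexp2l.
  have E20 : 0 <= E2 by apply: divr_ge0 => //; apply: mulr_ge0; apply: sqr_ge0.
  have hs1 : \sum_s (if s \in ~: Near then E2 else 0) <= \sum_s err s r.
    apply: ler_sum => s _; rewrite inE; case: ifPn => hs.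
      by apply: hfar; rewrite inE in hs.
    by rewrite /err sqr_ge0.
  rewrite -big_mkcond /= sumr_const in hs1.
  have hC : #|~: Near| = (N - #|Near|)%N by rewrite /N -(cardsC Near) addKn.
  rewrite hC -mulr_natr natrB in hs1; last by rewrite /N -(cardsC Near) leq_addr.
  have h1 : (#|Near|%:R : R) <= N%:R / 2.
    by rewrite ler_pdivlMr // -natrM ler_nat mulnC.
  have h2 : #|Near|%:R * E2 <= N%:R / 2 * E2 by apply: ler_wpM2r.
  lra.
have hge0 : forall s r, (0 <= (err s r)%:E)%E by move=> s r; rewrite lee_fin sqr_ge0.
have E20 : 0 <= E2 by apply: divr_ge0 => //; apply: mulr_ge0; apply: sqr_ge0.
have hint : ((N%:R / 2 * E2)%:E <= \sum_s \int[P]_r (err s r)%:E)%E.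
  have := @ge0_integral_sum _ _ _ P setT measurableT _ (fun s r => (err s r)%:E)
    hmeas (fun s r _ => hge0 s r) (index_enum {ffun 'I_d -> 'I_m}).
  move=> <-.
  apply: (@le_trans _ _ (\int[P]_(x in setT) (cst ((N%:R / 2 * E2)%:E)) x)%E).
    rewrite integral_cst // [X in (_ <= _ * X)%E](_ : _ = 1%E); first by rewrite mule1.
    exact: probability_setT.
  apply: ge0_le_integral => //.
  - by move=> r _; rewrite lee_fin; apply: mulr_ge0 => //; apply: divr_ge0.
  - exact: emeasurable_sum.
  - by move=> r _; rewrite sumEFin lee_fin; exact: hpt.
case: (pselect (exists s, (((512%:R ^+ 2)^-1 * y ^+ 2 * pw)%:E <= \int[P]_r (err s r)%:E)%E))
  => [[s hs]|hno].
  by exists (X s); split; [exact: hval | exact: hs].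
exfalso.
set G := (512%:R ^+ 2)^-1 * y ^+ 2 * pw.
have hle : forall s, (\int[P]_r (err s r)%:E <= G%:E)%E.
  move=> s; rewrite leNgt; apply/negP => h; apply: hno; exists s; exact: ltW.
have hsum : (\sum_s \int[P]_r (err s r)%:E <= \sum_(s : {ffun 'I_d -> 'I_m}) G%:E)%E.
  by apply: lee_sum => s _; exact: hle.
rewrite sumEFin sumr_const card_ffun !card_ord -hN in hsum.
have := le_trans hint hsum; rewrite lee_fin -mulr_natr => hfin.
pose Q : R := (2 ^ q)%:R.
have Q0 : 0 < Q by rewrite /Q ltr0n expn_gt0.
have hm : m%:R = 96%:R * Q :> R.
  have hmn : m = (96 * 2 ^ q)%N by rewrite /m expnD mulnCA mulnC.
  by rewrite /Q -natrM hmn.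
pose rr : R := (n - 1)%:R / n%:R.
have nR : 2%:R <= (n%:R : R) by rewrite ler_nat.
have hr : 2^-1 <= rr.
  rewrite /rr ler_pdivlMr ?ltr0n // natrB; last by apply: ltnW.
  lra.
have hE : E2 / 2 = ((y / (96%:R * Q)) * rr) ^+ 2 / 4%:R.
  rewrite /E2 /cc /a -hm /rr; field.
  by rewrite !lt0r_neq0 // ltr0n.
have pw0 : 0 <= pw by apply: powR_ge0.
have hpw : pw * Q ^+ 2 <= 1.
  have h2 : (0 : R) < 2 by [].
  have hq : ((2 * q)%N%:R : R) <= 2 * b%:R / d%:R.
    rewrite natrM -mulrA; apply: ler_wpM2l => //.
    rewrite ler_pdivlMr ?ltr0n // -natrM ler_nat.
    exact: leq_trunc_div.
  have hQ : Q ^+ 2 = (2 : R) `^ ((2 * q)%N%:R) by rewrite powR_mulrn // /Q natrX -exprM mulnC.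
  rewrite hQ /pw powRN.
  have hp0 : 0 < (2 : R) `^ (2 * b%:R / d%:R) by apply: powR_gt0.
  rewrite mulrC -ler_pdivlMr // mul1r.
  rewrite invrK; apply: ler_powR => //; lra.
have hnum := @numeric R y Q pw rr ypos Q0 pw0 hpw hr.
rewrite -hE in hnum.
have N0 : 0 < (N%:R : R) by rewrite ltr0n hN expn_gt0 m0.
have : G * N%:R < E2 / 2 * N%:R by rewrite ltr_pM2r.
lra.
Qed.
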